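(* Let $\epsilon,\epsilon_\theta\in[0,1]$ and $\theta\in\mathbb R$. If $\frac{2}{2-\epsilon}+\epsilon_\theta-2\ge 0$, then $\mathsf N^{\rm prono}$ (noise $\epsilon$) and $\mathsf Q_\theta^{\rm prono}$ (noise $\epsilon_\theta$) are jointly measurable. Moreover, if $\epsilon=\epsilon_\theta\ge 1/2$, they are jointly measurable.
   Context: All operators act on $\mathbb C^2$. The noisy projected number POVM: $\mathsf N^{\rm prono}_0=\begin{pmatrix}1-\epsilon/2&0\\0&\epsilon/2\end{pmatrix}$, $\mathsf N^{\rm prono}_1=\begin{pmatrix}\epsilon/2&0\\0&1-\epsilon/2\end{pmatrix}$. The noisy projected quadrature POVM on Borel $Y\subseteq\mathbb R$: $$\mathsf Q_\theta^{\rm prono}(Y)=\int_Y\begin{pmatrix}1&(1-\epsilon_\theta)\sqrt2\,y\,e^{-i\theta}\\(1-\epsilon_\theta)\sqrt2\,y\,e^{i\theta}&(1-\epsilon_\theta)2y^2+\epsilon_\theta\end{pmatrix}\frac{e^{-y^2}\,dy}{\sqrt\pi}.$$ Joint measurability means existence of a POVM $\mathsf G$ on $\{0,1\}\times\mathbb R$ with $\mathsf G(\{n\}\times\mathbb R)=\mathsf N^{\rm prono}_n$ and $\mathsf G(\{0,1\}\times Y)=\mathsf Q_\theta^{\rm prono}(Y)$. *)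

(* Defs.v *)
From mathcomp Require Import all_boot all_algebra.
From mathcomp Require Import all_classical all_reals all_analysis.
From mathcomp Require Import complex.
Import GRing.Theory Num.Theory.
Import numFieldNormedType.Exports.
Set Implicit Arguments. Unset Strict Implicit. Unset Printing Implicit Defensive.
Local Open Scope ring_scope.
Local Open Scope classical_set_scope.
Local Open Scope complex_scope.

Notation cmat R := 'M[R[i]]_2.

Definition mx2 (R : realType) (a b c d : R[i]) : cmat R :=
  \matrix_(k < 2, l < 2)
    if k == 0 then (if l == 0 then a else b) else (if l == 0 then c else d).

Definition adjmx (R : realType) m n (A : 'M[R[i]]_(m, n)) : 'M[R[i]]_(n, m) :=
  map_mx (@conjc R) A^T.

(* positive semidefinite: <v, A v> is a nonnegative real for every v in C^2
   (0 <= z in R[i] means Im z = 0 and Re z >= 0) *)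
Definition psd (R : realType) (A : cmat R) : Prop :=
  forall v : 'cV[R[i]]_2, 0 <= (adjmx v *m A *m v) 0 0.

(* POVM on a measurable space T with values in operators on C^2:
   positive on measurable sets, normalized, and (weakly) sigma-additive:
   for each v, the quadratic form A |-> <v, G(A) v> is countably additive. *)
Definition POVM (d : measure_display) (T : measurableType d) (R : realType)
    (G : set T -> cmat R) : Prop :=
  [/\ (forall A, measurable A -> psd (G A)),
      G setT = 1%:M &
      (forall (F : nat -> set T), (forall k, measurable (F k)) ->
         trivIset setT F ->
         forall v : 'cV[R[i]]_2,
           (fun n => \sum_(0 <= k < n) (complex.Re ((adjmx v *m G (F k) *m v) 0 0) : R))
             @ \oo --> (complex.Re ((adjmx v *m G (\bigcup_k F k) *m v) 0 0) : R))].

(* Noisy projected number POVM; outcome n = 0 is [false], n = 1 is [true]. *)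
Definition Nprono (R : realType) (eps : R) (n : bool) : cmat R :=
  if ~~ n then mx2 (1 - eps / 2)%:C 0 0 (eps / 2)%:C
  else mx2 (eps / 2)%:C 0 0 (1 - eps / 2)%:C.

Definition gauss (R : realType) (y : R) : R := expR (- y ^+ 2) / Num.sqrt pi.

Definition qdens (R : realType) (epst theta y : R) : cmat R :=
  mx2 1
      ((((1 - epst) * Num.sqrt 2 * y)%:C) * Complex (cos theta) (- sin theta))
      ((((1 - epst) * Num.sqrt 2 * y)%:C) * Complex (cos theta) (sin theta))
      ((1 - epst) * 2 * y ^+ 2 + epst)%:C.

(* Q_theta^prono(Y) = int_Y qdens(y) e^{-y^2}/sqrt(pi) dy  (entrywise, real and
   imaginary parts integrated separately w.r.t. Lebesgue measure) *)
Definition Qprono (R : realType) (epst theta : R) (Y : set R) : cmat R :=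
  \matrix_(k < 2, l < 2)
    Complex
      (Rintegral (@lebesgue_measure R) Y
         (fun y => complex.Re (qdens epst theta y k l) * gauss y))
      (Rintegral (@lebesgue_measure R) Y
         (fun y => complex.Im (qdens epst theta y k l) * gauss y)).

Definition jointly_measurable (R : realType) (eps epst theta : R) : Prop :=
  exists G : set (bool * R) -> cmat R,
    [/\ POVM G,
        (forall n : bool, G [set p | p.1 = n] = Nprono eps n) &
        (forall Y : set R, measurable Y -> G [set p | Y p.2] = Qprono epst theta Y)].

(* Main.v *)
Require Import Defs.
From mathcomp Require Import all_boot all_order all_algebra.
From mathcomp Require Import all_classical all_reals all_analysis.
From mathcomp Require Import complex.
From mathcomp Require Import measurable_realfun normal_distribution.
From mathcomp Require Import ring lra.
Import Order.TTheory GRing.Theory Num.Theory.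
Import numFieldNormedType.Exports.
Set Implicit Arguments. Unset Strict Implicit. Unset Printing Implicit Defensive.
Local Open Scope ring_scope.
Local Open Scope classical_set_scope.


Section Moments.
Variable R : realType.
Notation mu := (@lebesgue_measure R).

Definition mom (j : nat) (Y : set R) : R :=
  Rintegral mu Y (fun y => y ^+ j * gauss y).

Lemma gauss_ge0 (y : R) : 0 <= gauss y.
Proof. by rewrite /gauss divr_ge0 ?expR_ge0 ?sqrtr_ge0. Qed.

Lemma measurable_gauss : measurable_fun setT (@gauss R).
Proof.
rewrite /gauss; apply: measurable_funM => //.
by apply: measurableT_comp => //; apply: measurableT_comp => //.
Qed.

Lemma measurable_momf j : measurable_fun setT (fun y : R => y ^+ j * gauss y).
Proof. apply: measurable_funM; [exact: measurable_funX|exact: measurable_gauss]. Qed.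

Lemma mom_bound j (y : R) : (j <= 2)%N ->
  `| y ^+ j * gauss y | <= (2 / (Num.sqrt pi * normal_peak 1)) * normal_pdf 0 1 y.
Proof.
move=> hj.
have sp : 0 < Num.sqrt (pi : R) by rewrite sqrtr_gt0 pi_gt0.
have np : 0 < normal_peak (1 : R) by rewrite normal_peak_gt0 ?oner_neq0.
rewrite normal_pdfE ?oner_neq0 //= /normal_fun /gauss subr0 expr1n.
rewrite normrM (ger0_norm (gauss_ge0 y)).
have h1 : `|y ^+ j| <= 1 + y ^+ 2.
  case: j hj => [|[|[|]]]// _.
  - by rewrite expr0 normr1 lerDl sqr_ge0.
  - rewrite expr1; case: (lerP `|y| 1) => h.
      by apply: le_trans h _; rewrite lerDl sqr_ge0.
    apply: le_trans (_ : `|y| ^+ 2 <= _); last by rewrite real_normK ?num_real // lerDr.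
    by rewrite expr2 -[X in X <= _]mul1r ler_wpM2r // ltW.
  - by rewrite normrX real_normK ?num_real // lerDr.
have h2 : 1 + y ^+ 2 <= 2 * expR (y ^+ 2 / 2).
  have := expR_ge1Dx (y ^+ 2 / 2); move=> h; lra.
have h3 : expR (y ^+ 2 / 2) * expR (- y ^+ 2) = expR (- y ^+ 2 / 2).
  by rewrite -expRD; congr expR; field.
rewrite [X in _ <= X](_ : _ = (2 * expR (y ^+ 2 / 2)) * (expR (- y ^+ 2) / Num.sqrt pi)); last first.
  rewrite -h3; field; rewrite !gt_eqF //.
by rewrite ler_wpM2r ?divr_ge0 ?expR_ge0 ?sqrtr_ge0 //; exact: le_trans h1 h2.
Qed.

Lemma integrable_momf j : (j <= 2)%N ->
  mu.-integrable setT (EFin \o (fun y : R => y ^+ j * gauss y)).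
Proof.
move=> hj.
apply: (@le_integrable _ _ _ mu setT measurableT _ (fun y => ((2 / (Num.sqrt pi * normal_peak 1)) * normal_pdf 0 1 y)%:E)).
- apply/measurable_EFinP; exact: measurable_momf.
- move=> y _ /=.
  rewrite lee_fin; apply: le_trans (mom_bound _ hj) _; exact: ler_norm.
- under eq_fun do rewrite EFinM.
  exact: integrableZl (integrable_normal_pdf _ _).
Qed.

Lemma integrableS_momf j (Y : set R) : (j <= 2)%N -> measurable Y ->
  mu.-integrable Y (EFin \o (fun y : R => y ^+ j * gauss y)).
Proof. by move=> hj mY; apply: integrableS (integrable_momf hj). Qed.

Lemma intZ (Y : set R) (h : R -> R) (c : R) : measurable Y ->
  mu.-integrable Y (EFin \o h) -> mu.-integrable Y (EFin \o (fun y => c * h y)).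
Proof.
move=> mY ih.
rewrite (_ : EFin \o _ = fun y => (c%:E * (EFin \o h) y)%E); first exact: integrableZl.
by apply/funext => y /=; rewrite EFinM.
Qed.

Lemma intD (Y : set R) (h1 h2 : R -> R) : measurable Y ->
  mu.-integrable Y (EFin \o h1) -> mu.-integrable Y (EFin \o h2) ->
  mu.-integrable Y (EFin \o (fun y => h1 y + h2 y)).
Proof.
move=> mY i1 i2.
rewrite (_ : EFin \o _ = (EFin \o h1) \+ (EFin \o h2))%E; first exact: integrableD.
by apply/funext => y /=; rewrite EFinD.
Qed.

Lemma momlin (Y : set R) (f : R -> R) (c0 c1 c2 : R) : measurable Y ->
  (forall y, f y = c0 + c1 * y + c2 * y ^+ 2) ->
  Rintegral mu Y (fun y => f y * gauss y) = c0 * mom 0 Y + c1 * mom 1 Y + c2 * mom 2 Y.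
Proof.
move=> mY hf.
have i0 := integrableS_momf (isT : (0 <= 2)%N) mY.
have i1 := integrableS_momf (isT : (1 <= 2)%N) mY.
have i2 := integrableS_momf (isT : (2 <= 2)%N) mY.
rewrite (@eq_Rintegral _ _ _ mu Y (fun y => (c0 * (y ^+ 0 * gauss y) + c1 * (y ^+ 1 * gauss y))
   + c2 * (y ^+ 2 * gauss y))); last first.
  by move=> y _; rewrite hf expr0 expr1; ring.
rewrite RintegralD //; last 2 first.
- by apply: intD => //; apply: intZ.
- by apply: intZ.
rewrite RintegralD //; try by apply: intZ.
rewrite !RintegralZl //.
  rewrite mul1r /mom; congr (_ * _ + _ + _); apply: eq_Rintegral => y _.
  by rewrite expr0 mul1r.
by apply: eq_integrable i0 => // y _ /=; rewrite expr0 mul1r.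
Qed.

End Moments.

Section Mom2.
Variable R : realType.
Notation mu := (@lebesgue_measure R).

Lemma der_cont (g : R -> R) (dg : R -> R) : (forall x : R, is_derive x (1 : R) g (dg x)) -> continuous g.
Proof.
move=> h x; apply/differentiable_continuous/derivable1_diffP.
exact: (@ex_derive _ _ _ _ _ _ _ (h x)).
Qed.

Definition F2 (y : R) := - (y * expR (- y ^+ 2)).
Definition f2 (y : R) := (2 * y ^+ 2 - 1) * expR (- y ^+ 2).

Lemma dF2 (x : R) : is_derive x 1 F2 (f2 x).
Proof.
have h1 : is_derive x 1 (fun y : R => - y ^+ 2) (- (2 * x)).
  by apply: is_derive_eq; rewrite [_%:A]mulr1; ring.
have h2 : is_derive x 1 (expR \o (fun y : R => - y ^+ 2)) (expR (- x ^+ 2) * (- (2 * x))).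
  exact: is_derive1_comp.
have h3 : is_derive x 1 (- ((@id R) * (expR \o (fun y : R => - y ^+ 2))))
   (- (x *: (expR (- x ^+ 2) * (- (2 * x))) + expR (- x ^+ 2) *: 1)).
  by apply: is_deriveN; apply: is_deriveM.
rewrite (_ : F2 = (- ((@id R) * (expR \o (fun y : R => - y ^+ 2))))); last first.
  by apply/funext => y.
apply: is_derive_eq. rewrite /f2 /GRing.scale /=. ring.
Qed.

Lemma cont_F2 : continuous F2.
Proof. exact: (der_cont dF2). Qed.

Lemma cont_f2 : continuous f2.
Proof.
have h1 (x : R) : is_derive x (1:R) (fun y : R => 2 * y ^+ 2 - 1) (2 * (2 * x)).
  by apply: is_derive_eq; rewrite /GRing.scale /=; ring.
have c1 := der_cont h1.
move=> x.
change ({for x, continuous ((fun y : R => 2 * y ^+ 2 - 1) \* (fun y => expR (- y ^+ 2)))}).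
apply: continuousM; first exact: c1.
exact: continuous_gauss_fun.
Qed.

Lemma F2_cvg : F2 x @[x --> +oo] --> (0 : R).
Proof.
have hinv : (fun x : R => x^-1) x @[x --> +oo] --> (0 : R).
  have hp : \forall x \near (+oo : set_system R), 0 < (fun x : R => x) x.
    exact: nbhs_pinfty_gt.
  by apply/(gtr0_cvgV0 hp); exact: cvg_id.
apply: (@squeeze_cvgr _ _ _ _ (fun x => - x^-1) (fun x => x^-1)).
- near=> x.
  have x1 : 1 <= x by near: x; apply: nbhs_pinfty_ge.
  have hx : 0 < x by apply: lt_le_trans ltr01 x1.
  have he : x ^+ 2 <= expR (x ^+ 2).
    have := expR_ge1Dx (x ^+ 2); lra.
  have ex : 0 < expR (x ^+ 2) by apply: expR_gt0.
  have h : x * expR (- x ^+ 2) <= x^-1.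
    rewrite expRN ler_pdivrMr //.
    rewrite [X in X <= _](_ : x = x^-1 * x ^+ 2); last by field; rewrite gt_eqF.
    by rewrite ler_pM2l ?invr_gt0.
  have h0 : 0 <= x * expR (- x ^+ 2) by rewrite mulr_ge0 ?expR_ge0 ?ltW.
  rewrite /F2; apply/andP; split; lra.
- by rewrite -oppr0; apply: cvgN.
- exact: hinv.
Unshelve. all: by end_near.
Qed.

Lemma dF2' (x : R) : F2^`() x = f2 x.
Proof. by rewrite derive1E; exact: (@derive_val _ _ _ _ _ _ _ (dF2 x)). Qed.

Lemma derF2 (x : R) : derivable F2 x 1.
Proof. exact: (@ex_derive _ _ _ _ _ _ _ (dF2 x)). Qed.

Lemma measurable_f2 : measurable_fun setT f2.
Proof. exact: continuous_measurable_fun cont_f2. Qed.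

Lemma intA : (\int[mu]_(x in `[1%R, +oo[) (f2 x)%:E = (0 - F2 1)%:E)%E.
Proof.
rewrite EFinB; apply: ge0_continuous_FTC2y.
- move=> x x1; rewrite /f2 mulr_ge0 ?expR_ge0 //.
  have : 1 <= x ^+ 2 by rewrite expr_ge1 // (le_trans ler01).
  lra.
- exact: continuous_subspaceT cont_f2.
- exact: F2_cvg.
- by move=> x _; exact: derF2.
- apply: cvg_at_right_filter; exact: cont_F2.
- by move=> x _; exact: dF2'.
Qed.

Lemma intB : (\int[mu]_(x in `[0%R, 1%R]) (f2 x)%:E = (F2 1)%:E - (F2 0)%:E)%E.
Proof.
apply: continuous_FTC2.
- exact: ltr01.
- exact: continuous_subspaceT cont_f2.
- split.
  + by move=> x _; exact: derF2.
  + apply: cvg_at_right_filter; exact: cont_F2.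
  + apply: cvg_at_left_filter; exact: cont_F2.
- by move=> x _; exact: dF2'.
Qed.

Lemma intC : (\int[mu]_(x in `[0%R, +oo[) (f2 x)%:E = 0)%E.
Proof.
have -> : `[0, +oo[ = `[0, 1] `|` `]1, +oo[ :> set R.
  by rewrite -itv_bndbnd_setU //= bnd_simp.
rewrite integral_setU //=.
- rewrite integral_itv_obnd_cbnd; last exact: measurable_funTS (measurableT_comp _ measurable_f2).
  rewrite intA intB /F2 -!EFinD mul0r oppr0.
  by congr EFin; ring.
- exact: measurable_funTS (measurableT_comp _ measurable_f2).
- apply/disj_setPS => x [] /=; rewrite !in_itv /= => /andP[_ x1] /andP[x1' _].
  by move: (lt_le_trans x1' x1); rewrite ltxx.
Qed.

Lemma sqrtpi_gt0 : 0 < Num.sqrt (pi : R).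
Proof. by rewrite sqrtr_gt0 pi_gt0. Qed.

Lemma integrable_e j (Y : set R) : (j <= 2)%N -> measurable Y ->
  mu.-integrable Y (EFin \o (fun y : R => y ^+ j * expR (- y ^+ 2))).
Proof.
move=> hj mY.
have := intZ (Num.sqrt pi) mY (integrableS_momf hj mY).
apply: eq_integrable => // y _ /=; rewrite /gauss.
congr EFin; field; rewrite gt_eqF //; exact: sqrtpi_gt0.
Qed.

Lemma RI_e0 : Rintegral mu `[0%R, +oo[ (fun y : R => expR (- y ^+ 2)) = Num.sqrt pi / 2.
Proof.
rewrite /Rintegral.
rewrite (_ : (\int[mu]_(x in _) (expR (- x ^+ 2))%:E)%E = (\int[mu]_(x in `[0%R,+oo[) (gauss_fun x)%:E)%E) //.
by rewrite integral0y_gauss.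
Qed.

Lemma RI_e2 : Rintegral mu `[0%R, +oo[ (fun y : R => y ^+ 2 * expR (- y ^+ 2)) = Num.sqrt pi / 4.
Proof.
have m0 : measurable (`[0%R, +oo[ : set R) by [].
have h0 : Rintegral mu `[0%R, +oo[ f2 = 0 by rewrite /Rintegral intC.
have ie0 := integrable_e (isT : (0 <= 2)%N) m0.
have ie2 := integrable_e (isT : (2 <= 2)%N) m0.
have ie0' : mu.-integrable `[0%R, +oo[ (EFin \o (fun y : R => expR (- y ^+ 2))).
  by apply: eq_integrable ie0 => // y _ /=; rewrite expr0 mul1r.
rewrite (@eq_Rintegral _ _ _ mu _ (fun y => 2 * (y ^+ 2 * expR (- y ^+ 2)) - expR (- y ^+ 2)) f2) in h0; last first.
  by move=> y _; rewrite /f2; ring.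
rewrite RintegralB // in h0; last exact: intZ.
rewrite RintegralZl // RI_e0 in h0.
have : 2 * Rintegral mu `[0%R, +oo[ (fun y : R => y ^+ 2 * expR (- y ^+ 2)) = Num.sqrt pi / 2 by lra.
move=> h; lra.
Qed.

Lemma RI_T2 : Rintegral mu setT (fun y : R => y ^+ 2 * expR (- y ^+ 2)) = Num.sqrt pi / 2.
Proof.
rewrite /Rintegral ge0_symfun_integralT.
- rewrite (_ : [set x : R | 0 <= x] = `[0%R, +oo[); last first.
    by apply/seteqP; split => x /=; rewrite in_itv /= andbT.
  have := RI_e2; rewrite /Rintegral => h.
  have fin : (\int[mu]_(x in `[0%R, +oo[) (x ^+ 2 * expR (- x ^+ 2))%:E)%E \is a fin_num.
    apply: integrable_fin_num => //; exact: (integrable_e (isT : (2 <= 2)%N)).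
  rewrite -(fineK fin) -EFinM /=; lra.
- by move=> x; rewrite mulr_ge0 ?sqr_ge0 ?expR_ge0.
- move=> x; change ({for x, continuous ((fun y : R => y ^+ 2) \* (fun y => expR (- y ^+ 2)))}).
  apply: continuousM; last exact: continuous_gauss_fun.
  exact: exprn_continuous.
- by move=> x /=; rewrite sqrrN.
Qed.

Lemma momE j (Y : set R) : (j <= 2)%N -> measurable Y ->
  mom j Y = Rintegral mu Y (fun y => y ^+ j * expR (- y ^+ 2)) / Num.sqrt pi.
Proof.
move=> hj mY; rewrite /mom -RintegralZr //; last exact: integrable_e.
apply: eq_Rintegral => y _; rewrite /gauss; ring.
Qed.

Lemma mom0T : mom 0 [set: R] = 1.
Proof.
rewrite momE //.
rewrite (_ : Rintegral mu setT _ = Num.sqrt pi); first by rewrite divff // gt_eqF // sqrtpi_gt0.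
rewrite /Rintegral (_ : (\int[mu]_(x in _) (x ^+ 0 * expR (- x ^+ 2))%:E)%E = (\int[mu]_x (gauss_fun x)%:E)%E).
  by rewrite integralT_gauss.
by apply: eq_integral => x _; rewrite expr0 mul1r.
Qed.

Lemma mom2T : mom 2 [set: R] = 2^-1.
Proof.
rewrite momE // RI_T2; field; rewrite gt_eqF //; exact: sqrtpi_gt0.
Qed.

Lemma RI_T1 : Rintegral mu setT (fun y : R => y ^+ 1 * expR (- y ^+ 2)) = 0.
Proof.
pose h := fun y : R => y ^+ 1 * expR (- y ^+ 2).
have hc : continuous h.
  move=> x; change ({for x, continuous ((fun y : R => y ^+ 1) \* (fun y => expR (- y ^+ 2)))}).
  apply: continuousM; last exact: continuous_gauss_fun.
  exact: exprn_continuous.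
have sub := @ge0_integration_by_substitutionNy R (fun x => - h x) 0.
rewrite oppr0 in sub.
have := sub _ _.
move=> /(_ _ _) H.
have {H} H : (\int[mu]_(x in `]-oo, 0%R]) (- h x)%:E = \int[mu]_(x in `[0%R, +oo[) (h x)%:E)%E.
  rewrite H.
  - by apply: eq_integral => x _ /=; rewrite /h /= sqrrN; congr EFin; ring.
  - apply: continuous_subspaceT => x; apply: continuousN; exact: hc.
  - move=> x; rewrite in_itv /= => x0; rewrite /h expr1 -mulNr mulr_ge0 ?expR_ge0 //.
    by rewrite oppr_ge0 ltW.
have mN : measurable (`]-oo, 0%R] : set R) by [].
have mNo : measurable (`]-oo, 0%R[ : set R) by [].
have mP : measurable (`[0%R, +oo[ : set R) by [].
have iN := integrable_e (isT : (1 <= 2)%N) mN.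
have iNo := integrable_e (isT : (1 <= 2)%N) mNo.
have iP := integrable_e (isT : (1 <= 2)%N) mP.
have iT := integrable_e (isT : (1 <= 2)%N) (@measurableT _ R).
have HR : Rintegral mu `]-oo, 0%R] (fun x => -1 * h x) = Rintegral mu `[0%R, +oo[ h.
  rewrite /Rintegral -H; congr fine; apply: eq_integral => x _; by rewrite mulN1r.
rewrite RintegralZl // in HR.
rewrite (_ : setT = `]-oo, 0%R[ `|` `[0%R, +oo[); last first.
  apply/seteqP; split => x //= _; rewrite !in_itv /=.
  by case: (ltrP x 0) => hx; [left|right].
rewrite Rintegral_setU //; last 2 first.
- rewrite (_ : _ `|` _ = setT) //.
  apply/seteqP; split => x //= _; rewrite !in_itv /=.
  by case: (ltrP x 0) => hx; [left|right].
- apply/disj_setPS => x [] /=; rewrite !in_itv /= andbT => x0 x0'.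
  by move: (lt_le_trans x0 x0'); rewrite ltxx.
rewrite Rintegral_itv_bndo_bndc //.
rewrite -/h -HR; ring.
Qed.

Lemma mom1T : mom 1 [set: R] = 0.
Proof. by rewrite momE // RI_T1 mul0r. Qed.

Lemma mom_set0 j : mom j (set0 : set R) = 0.
Proof. exact: Rintegral_set0. Qed.

End Mom2.

Section MomSigma.
Variable R : realType.
Notation mu := (@lebesgue_measure R).

Lemma mom_fin j (A : set R) : (j <= 2)%N -> measurable A ->
  (\int[mu]_(x in A) (x ^+ j * gauss x)%:E)%E = (mom j A)%:E.
Proof.
move=> hj mA; rewrite /mom /Rintegral fineK //.
apply: integrable_fin_num => //; exact: integrableS_momf.
Qed.

Lemma mom_sigma j (F : nat -> set R) : (j <= 2)%N -> (forall k, measurable (F k)) ->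
  trivIset setT F ->
  (fun n => \sum_(0 <= k < n) mom j (F k)) @ \oo --> mom j (\bigcup_k F k).
Proof.
move=> hj mF tF.
have mU : measurable (\bigcup_k F k) by exact: bigcupT_measurable.
have H := @charge_semi_sigma_additive _ _ _ (induced_charge (@integrable_momf R j hj)) F mF tF mU.
have {}H : (fun n => \sum_(0 <= i < n) (\int[mu]_(x in F i) (x ^+ j * gauss x)%:E)%E) @ \oo -->
   (\int[mu]_(x in \bigcup_k F k) (x ^+ j * gauss x)%:E)%E := H.
rewrite mom_fin // in H.
have := (fine_cvgP _ _).1 H.
move=> [_ H2].
apply: cvg_trans H2; apply: near_eq_cvg; apply: nearW => n /=.
rewrite (eq_bigr (fun k => (mom j (F k))%:E)); last by move=> k _; rewrite mom_fin.
by rewrite sumEFin.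
Qed.

End MomSigma.

Local Open Scope complex_scope.
Section Mat.
Variable R : realType.
Notation mu := (@lebesgue_measure R).

Definition Mx (al be ga de ct st a b c : R) : cmat R :=
  mx2 (al * a)%:C ((be * b)%:C * Complex ct (- st)) ((be * b)%:C * Complex ct st)
      (ga * a + de * c)%:C.

Lemma Qprono_mom (epst th : R) (Y : set R) : measurable Y ->
  Qprono epst th Y = Mx 1 ((1 - epst) * Num.sqrt 2) epst ((1 - epst) * 2) (cos th) (sin th)
     (mom 0 Y) (mom 1 Y) (mom 2 Y).
Proof.
move=> mY; apply/matrixP => i j; rewrite !mxE /=.
case: i => [[|[|//]] hi]; case: j => [[|[|//]] hj] /=.
all: congr Complex.
- rewrite (@momlin _ _ _ 1 0 0 mY); [ring | by move=> y; rewrite /qdens /mx2 mxE /=; ring].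
- rewrite (@momlin _ _ _ 0 0 0 mY); [ring | by move=> y; rewrite /qdens /mx2 mxE /=; ring].
- rewrite (@momlin _ _ _ 0 ((1 - epst) * Num.sqrt 2 * cos th) 0 mY); [ring | by move=> y; rewrite /qdens /mx2 mxE /=; ring].
- rewrite (@momlin _ _ _ 0 (- ((1 - epst) * Num.sqrt 2 * sin th)) 0 mY); [ring | by move=> y; rewrite /qdens /mx2 mxE /=; ring].
- rewrite (@momlin _ _ _ 0 ((1 - epst) * Num.sqrt 2 * cos th) 0 mY); [ring | by move=> y; rewrite /qdens /mx2 mxE /=; ring].
- rewrite (@momlin _ _ _ 0 ((1 - epst) * Num.sqrt 2 * sin th) 0 mY); [ring | by move=> y; rewrite /qdens /mx2 mxE /=; ring].
- rewrite (@momlin _ _ _ epst 0 ((1 - epst) * 2) mY); [ring | by move=> y; rewrite /qdens /mx2 mxE /=; ring].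
- rewrite (@momlin _ _ _ 0 0 0 mY); [ring | by move=> y; rewrite /qdens /mx2 mxE /=; ring].
Qed.
Lemma qform (v : 'cV[R[i]]_2) (A : cmat R) :
  (adjmx v *m A *m v) 0 0 =
  (v 0 0)^* * (A 0 0 * v 0 0 + A 0 1 * v 1 0) + (v 1 0)^* * (A 1 0 * v 0 0 + A 1 1 * v 1 0).
Proof.
rewrite !mxE !big_ord_recr !big_ord0 /= !add0r !mxE !big_ord_recr !big_ord0 /= !add0r.
have e0 : widen_ord (leqnSn 1) ord_max = 0 :> 'I_2 by apply/val_inj.
have e1 : ord_max = 1 :> 'I_2 by apply/val_inj.
rewrite e0 e1 /adjmx !mxE; ring.
Qed.

Definition Pv (v : 'cV[R[i]]_2) := complex.Re (v 0 0) ^+ 2 + complex.Im (v 0 0) ^+ 2.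
Definition Qv (v : 'cV[R[i]]_2) := complex.Re (v 1 0) ^+ 2 + complex.Im (v 1 0) ^+ 2.
Definition Wv (v : 'cV[R[i]]_2) (ct st : R) :=
  (complex.Re (v 0 0) * complex.Re (v 1 0) + complex.Im (v 0 0) * complex.Im (v 1 0)) * ct
  + (complex.Re (v 0 0) * complex.Im (v 1 0) - complex.Im (v 0 0) * complex.Re (v 1 0)) * st.
Definition qv (al be ga de ct st : R) (v : 'cV[R[i]]_2) (a b c : R) :=
  al * a * Pv v + 2 * (be * b) * Wv v ct st + (ga * a + de * c) * Qv v.

Lemma qform_Mx v al be ga de ct st a b c :
  (adjmx v *m Mx al be ga de ct st a b c *m v) 0 0 = (qv al be ga de ct st v a b c)%:C.
Proof.
rewrite qform /Mx /mx2 !mxE /= /qv /Pv /Qv /Wv.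
case: (v 0 0) => x0 y0; case: (v 1 0) => x1 y1 /=.
apply/eqP; rewrite eq_complex /=; apply/andP; split; apply/eqP; ring.
Qed.

Lemma W_bound v ct st : ct ^+ 2 + st ^+ 2 = 1 -> Wv v ct st ^+ 2 <= Pv v * Qv v.
Proof.
move=> hcs; rewrite /Wv /Pv /Qv.
set x0 := complex.Re (v 0 0); set y0 := complex.Im (v 0 0).
set x1 := complex.Re (v 1 0); set y1 := complex.Im (v 1 0).
set A := x0 * x1 + y0 * y1; set B := x0 * y1 - y0 * x1.
have e1 : (A * ct + B * st) ^+ 2 + (A * st - B * ct) ^+ 2 = (A ^+ 2 + B ^+ 2) * (ct ^+ 2 + st ^+ 2) by ring.
have e2 : A ^+ 2 + B ^+ 2 = (x0 ^+ 2 + y0 ^+ 2) * (x1 ^+ 2 + y1 ^+ 2) by rewrite /A /B; ring.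
rewrite hcs mulr1 e2 in e1.
have := sqr_ge0 (A * st - B * ct); lra.
Qed.

Lemma quad_ineq (al D t P Q W : R) : 0 <= al -> 0 <= D -> t ^+ 2 <= al * D ->
  0 <= P -> 0 <= Q -> W ^+ 2 <= P * Q -> 0 <= al * P + 2 * t * W + D * Q.
Proof.
move=> ha hD ht hP hQ hW.
set S := al * P + D * Q.
have hS : 0 <= S by rewrite /S addr_ge0 // mulr_ge0.
have h1 : 4 * (al * D) * (P * Q) <= S ^+ 2.
  have := sqr_ge0 (al * P - D * Q); rewrite /S; nra.
have h2 : t ^+ 2 * W ^+ 2 <= (al * D) * (P * Q).
  apply: le_trans (_ : t ^+ 2 * (P * Q) <= _).
    by rewrite ler_wpM2l // sqr_ge0.
  by rewrite ler_wpM2r // mulr_ge0.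
have h3 : (2 * t * W) ^+ 2 <= S ^+ 2 by nra.
rewrite -addrA [2 * t * W + _]addrC addrA -/S.
nra.
Qed.

Lemma qv_pt_ge0 al be ga de ct st v y : ct ^+ 2 + st ^+ 2 = 1 ->
  0 <= al -> 0 <= ga -> 0 <= de -> be ^+ 2 <= al * de ->
  0 <= qv al be ga de ct st v 1 y (y ^+ 2).
Proof.
move=> hcs ha hg hd hb; rewrite /qv mulr1.
have hP : 0 <= Pv v by rewrite /Pv addr_ge0 ?sqr_ge0.
have hQ : 0 <= Qv v by rewrite /Qv addr_ge0 ?sqr_ge0.
rewrite (_ : 2 * (be * y) = 2 * (be * y)) //.
apply: quad_ineq => //.
- by rewrite mulr1 addr_ge0 // mulr_ge0 // sqr_ge0.
- rewrite mulr1 exprMn.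
  have hy := sqr_ge0 y.
  have : be ^+ 2 * y ^+ 2 <= al * de * y ^+ 2 by rewrite ler_wpM2r.
  have : 0 <= al * ga by rewrite mulr_ge0.
  nra.
- exact: W_bound.
Qed.

Lemma qv_mom_ge0 al be ga de ct st v (Y : set R) : measurable Y -> ct ^+ 2 + st ^+ 2 = 1 ->
  0 <= al -> 0 <= ga -> 0 <= de -> be ^+ 2 <= al * de ->
  0 <= qv al be ga de ct st v (mom 0 Y) (mom 1 Y) (mom 2 Y).
Proof.
move=> mY hcs ha hg hd hb.
have := @momlin R Y (fun y => qv al be ga de ct st v 1 y (y ^+ 2))
  (al * Pv v + ga * Qv v) (2 * be * Wv v ct st) (de * Qv v) mY.
move=> /(_ _) H.
rewrite (_ : qv _ _ _ _ _ _ _ _ _ _ = Rintegral mu Y (fun y => qv al be ga de ct st v 1 y (y ^+ 2) * gauss y)).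
  apply: Rintegral_ge0 => y _; apply: mulr_ge0; last exact: gauss_ge0.
  exact: qv_pt_ge0.
rewrite H; first by rewrite /qv; ring.
by move=> y; rewrite /qv; ring.
Qed.

End Mat.

Local Open Scope complex_scope.

Ltac mxent := apply/matrixP => -[[|[|//]] ?] -[[|[|//]] ?]; rewrite !mxE /=;
  apply/eqP; rewrite eq_complex /=; apply/andP; split; apply/eqP.

Section Main.
Variable R : realType.
Notation mu := (@lebesgue_measure R).

Lemma Mx_add (al be ga de al' be' ga' de' ct st a b c : R) :
  Mx al be ga de ct st a b c + Mx al' be' ga' de' ct st a b c =
  Mx (al + al') (be + be') (ga + ga') (de + de') ct st a b c.
Proof. by rewrite /Mx; mxent; ring. Qed.

Variables (e et th m : R).
Let u := 1 - et.
Let ct := cos th.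
Let st := sin th.
Let al0 := 1 - e / 2.
Let be0 := m * Num.sqrt 2.
Let ga0 := e / 2 - m.
Let de0 := 2 * m.
Let al1 := e / 2.
Let be1 := (u - m) * Num.sqrt 2.
Let ga1 := et - e / 2 + m.
Let de1 := 2 * (u - m).

Definition Gmom (A : set R) (n : bool) : cmat R :=
  if n then Mx al1 be1 ga1 de1 ct st (mom 0 A) (mom 1 A) (mom 2 A)
  else Mx al0 be0 ga0 de0 ct st (mom 0 A) (mom 1 A) (mom 2 A).

Definition Gj (A : set (bool * R)) : cmat R :=
  Gmom (xsection A false) false + Gmom (xsection A true) true.

Lemma sum_params : [/\ al0 + al1 = 1, be0 + be1 = (1 - et) * Num.sqrt 2,
   ga0 + ga1 = et & de0 + de1 = (1 - et) * 2].
Proof. by split; rewrite /al0 /al1 /be0 /be1 /ga0 /ga1 /de0 /de1 /u; ring. Qed.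

Lemma Gj_marg_Y (Y : set R) : measurable Y -> Gj [set p | Y p.2] = Qprono et th Y.
Proof.
move=> mY; rewrite /Gj.
have H : forall b, xsection [set p : bool * R | Y p.2] b = Y.
  by move=> b; apply/seteqP; split => y; [move/xsectionP | move=> hy; apply/xsectionP].
rewrite !H /Gmom /= Mx_add Qprono_mom //.
by case: sum_params => -> -> -> ->.
Qed.

Lemma Gj_setT : Gj setT = 1%:M.
Proof.
rewrite /Gj.
have H : forall b, xsection [set: bool * R] b = setT.
  by move=> b; apply/seteqP; split => y // _; apply/xsectionP.
rewrite !H.
rewrite /Gmom /= Mx_add; case: sum_params => -> -> -> ->.
rewrite mom0T mom1T mom2T /Mx; mxent; rewrite ?mul0r ?mulr0; try ring.
all: rewrite /u; lra.
Qed.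

Lemma Gj_marg_N (n : bool) : Gj [set p | p.1 = n] = Nprono e n.
Proof.
have HT : xsection [set p : bool * R | p.1 = n] n = setT.
  by apply/seteqP; split => y // _; apply/xsectionP.
have H0 : xsection [set p : bool * R | p.1 = n] (~~ n) = set0.
  apply/seteqP; split => y // /xsectionP /=; by clear HT; case: n.
rewrite /Gj /Nprono.
move: HT H0; case: n => /= -> ->; rewrite /Gmom !mom_set0 mom0T mom1T mom2T /Mx; mxent.
all: rewrite /al0 /al1 /be0 /be1 /ga0 /ga1 /de0 /de1 /u; try ring. all: try lra.
Qed.

Hypothesis he0 : 0 <= e.
Hypothesis he1 : e <= 1.
Hypothesis het0 : 0 <= et.
Hypothesis het1 : et <= 1.
Hypothesis hm0 : 0 <= m.
Hypothesis hm1 : m <= e / 2.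
Hypothesis hm2 : m <= u.
Hypothesis hm3 : u - m <= e / 2.

Lemma cs1 : ct ^+ 2 + st ^+ 2 = 1.
Proof. exact: cos2Dsin2. Qed.

Lemma sqrt2_sq : Num.sqrt (2 : R) ^+ 2 = 2.
Proof. by rewrite sqr_sqrtr // ler0n. Qed.

Lemma Gmom_psd (A : set R) (n : bool) (v : 'cV[R[i]]_2) : measurable A ->
  0 <= (adjmx v *m Gmom A n *m v) 0 0.
Proof.
move=> mA; rewrite /Gmom; case: n; rewrite qform_Mx ler0c.
all: have H1 := he0; have H2 := he1; have H3 := het0; have H4 := het1.
all: have H5 := hm0; have H6 := hm1; have H7 := hm2; have H8 := hm3.
- have h1 : 0 <= al1 by rewrite /al1; lra.
  have h2 : 0 <= ga1 by rewrite /ga1 /u in H8 *; lra.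
  have h3 : 0 <= de1 by rewrite /de1; lra.
  have h4 : be1 ^+ 2 <= al1 * de1.
    rewrite /be1 /al1 /de1 exprMn sqrt2_sq.
    have : 0 <= u - m by lra.
    nra.
  by apply: qv_mom_ge0; [exact: mA|exact: cs1|exact: h1|exact: h2|exact: h3|exact: h4].
- have h1 : 0 <= al0 by rewrite /al0; lra.
  have h2 : 0 <= ga0 by rewrite /ga0; lra.
  have h3 : 0 <= de0 by rewrite /de0; lra.
  have h4 : be0 ^+ 2 <= al0 * de0.
    rewrite /be0 /al0 /de0 exprMn sqrt2_sq.
    nra.
  by apply: qv_mom_ge0; [exact: mA|exact: cs1|exact: h1|exact: h2|exact: h3|exact: h4].
Qed.

Lemma Gj_psd (A : set (bool * R)) : measurable A -> psd (Gj A).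
Proof.
move=> mA v; rewrite /Gj mulmxDr mulmxDl mxE.
apply: addr_ge0; apply: Gmom_psd; exact: measurable_xsection.
Qed.

Lemma qv_lin al be ga de v a b c :
  qv al be ga de ct st v a b c =
  a * (al * Pv v + ga * Qv v) + b * (2 * be * Wv v ct st) + c * (de * Qv v).
Proof. rewrite /qv; ring. Qed.

Lemma ReGj (A : set (bool * R)) (v : 'cV[R[i]]_2) :
  complex.Re ((adjmx v *m Gj A *m v) 0 0) =
    qv al0 be0 ga0 de0 ct st v (mom 0 (xsection A false)) (mom 1 (xsection A false)) (mom 2 (xsection A false))
  + qv al1 be1 ga1 de1 ct st v (mom 0 (xsection A true)) (mom 1 (xsection A true)) (mom 2 (xsection A true)).
Proof. by rewrite /Gj mulmxDr mulmxDl mxE /Gmom /= !qform_Mx. Qed.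

Lemma trivIset_xsection (F : nat -> set (bool * R)) b :
  trivIset setT F -> trivIset setT (fun k => xsection (F k) b).
Proof.
move=> tF i j _ _ [y [/xsectionP hi /xsectionP hj]].
by apply: tF => //; exists (b, y).
Qed.

Lemma mom_sigma_sec (F : nat -> set (bool * R)) j b : (j <= 2)%N ->
  (forall k, measurable (F k)) -> trivIset setT F ->
  (fun n => \sum_(0 <= k < n) mom j (xsection (F k) b)) @ \oo -->
     mom j (xsection (\bigcup_k F k) b).
Proof.
move=> hj mF tF; rewrite xsection_bigcup.
apply: mom_sigma => //; last exact: trivIset_xsection.
by move=> k; apply: measurable_xsection.
Qed.

Lemma Gj_sigma (F : nat -> set (bool * R)) (mF : forall k, measurable (F k))
  (tF : trivIset setT F) (v : 'cV[R[i]]_2) :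
  (fun n => \sum_(0 <= k < n) complex.Re ((adjmx v *m Gj (F k) *m v) 0 0)) @ \oo -->
  complex.Re ((adjmx v *m Gj (\bigcup_k F k) *m v) 0 0).
Proof.
set S := fun j b n => \sum_(0 <= k < n) mom j (xsection (F k) b).
have cS : forall j b, (j <= 2)%N -> S j b n @[n --> \oo] --> mom j (xsection (\bigcup_k F k) b).
  by move=> j b hj; apply: mom_sigma_sec.
set K00 := al0 * Pv v + ga0 * Qv v; set K01 := 2 * be0 * Wv v ct st; set K02 := de0 * Qv v.
set K10 := al1 * Pv v + ga1 * Qv v; set K11 := 2 * be1 * Wv v ct st; set K12 := de1 * Qv v.
have -> : (fun n => \sum_(0 <= k < n) complex.Re ((adjmx v *m Gj (F k) *m v) 0 0)) =
   (fun n => (S 0%N false n * K00 + S 1%N false n * K01 + S 2%N false n * K02)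
           + (S 0%N true n * K10 + S 1%N true n * K11 + S 2%N true n * K12)).
  apply/funext => n; rewrite /S.
  under eq_bigr do rewrite ReGj !qv_lin.
  rewrite !big_split /= !mulr_suml.
  by rewrite -!/K00 -!/K01.
rewrite ReGj !qv_lin -/K00 -/K01 -/K02 -/K10 -/K11 -/K12.
apply: cvgD; apply: cvgD; try apply: cvgD.
all: apply: cvgMr_tmp; exact: cS.
Qed.

Lemma core_jm : jointly_measurable e et th.
Proof.
exists Gj; split.
- split.
  + exact: Gj_psd.
  + exact: Gj_setT.
  + exact: Gj_sigma.
- exact: Gj_marg_N.
- exact: Gj_marg_Y.
Qed.

End Main.

Lemma jm_of_le (R : realType) (e et th : R) :
  0 <= e -> e <= 1 -> 0 <= et -> et <= 1 -> 1 - et <= e -> jointly_measurable e et th.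
Proof.
move=> he0 he1 het0 het1 hu.
case: (lerP (1 - et) (e / 2)) => hc.
- apply: (@core_jm R e et th (1 - et)) => //; lra.
- apply: (@core_jm R e et th (e / 2)) => //; lra.
Qed.

Close Scope complex_scope.

Theorem mainTheorem8 (R : realType) (eps epst theta : R) :
  0 <= eps <= 1 -> 0 <= epst <= 1 ->
  (2 / (2 - eps) + epst - 2 >= 0 -> jointly_measurable eps epst theta) /\
  (eps = epst -> 1 / 2 <= eps -> jointly_measurable eps epst theta).
Proof.
move=> /andP[he0 he1] /andP[het0 het1]; split.
- move=> h; apply: jm_of_le => //.
  set q := 2 / (2 - eps) in h.
  have hq : q * (2 - eps) = 2 by rewrite /q; field; rewrite subr_eq0 gt_eqF //; lra.
  have h2 : 0 < 2 - eps by lra.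
  have : (1 + eps - q) * (2 - eps) = eps * (1 - eps) by rewrite mulrBl hq; ring.
  have : 0 <= eps * (1 - eps) by rewrite mulr_ge0 //; lra.
  nra.
- move=> <- h; apply: jm_of_le => //; lra.
Qed.
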